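(* Let $\Lambda\in\mathbb{H}^{\mathbb{Z}}$ satisfy $\sum_n(1+|\Lambda_n|^2)^{-1}<\infty$, and assume $\Lambda$ is generic, i.e. $\Lambda_ni\bar\Lambda_n\neq\Lambda_mi\bar\Lambda_m$ for all $n\neq m$. Then $G_\Lambda$ acts freely on $N_\Lambda=\{x\in M_\Lambda: x_ni\bar x_n-\Lambda_ni\bar\Lambda_n\text{ is independent of }n\}$.
   Context: $\mathbb{H}$ denotes the quaternions, and $S^1\subset\mathbb{C}\subset\mathbb{H}$. $M$ is the space of square-summable sequences in $\mathbb{H}^{\mathbb{Z}}$, and $M_\Lambda=\Lambda+M$. $G_\Lambda=\{g\in(S^1)^{\mathbb{Z}}:\sum_n(1+|\Lambda_n|^2)|1-g_n|^2<\infty,\ \prod_ng_n=1\}$; the product converges under this summability condition. $G_\Lambda$ acts on $M_\Lambda$ by $(xg)_n=x_ng_n$. The set $N_\Lambda$ is the zero set of the hyperkähler moment map $\hat\mu_\Lambda$, given by $\langle\hat\mu_\Lambda(x),\xi\rangle=\sum_n(x_ni\bar x_n-\Lambda_ni\bar\Lambda_n)\xi_n$ for $\xi$ in the Lie algebra $\{\xi\in\mathbb{R}^{\mathbb{Z}}:\sum(1+|\Lambda_n|^2)\xi_n^2<\infty,\ \sum\xi_n=0\}$. *)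

(* Defs.v *)
From Stdlib Require Import Reals ZArith.
Open Scope R_scope.

(** Quaternions a + b i + c j + d k. *)
Record H : Type := mkH { q0 : R; q1 : R; q2 : R; q3 : R }.

Definition Hadd (x y : H) : H :=
  mkH (q0 x + q0 y) (q1 x + q1 y) (q2 x + q2 y) (q3 x + q3 y).
Definition Hopp (x : H) : H := mkH (- q0 x) (- q1 x) (- q2 x) (- q3 x).
Definition Hsub (x y : H) : H := Hadd x (Hopp y).
Definition Hmul (x y : H) : H :=
  mkH (q0 x * q0 y - q1 x * q1 y - q2 x * q2 y - q3 x * q3 y)
      (q0 x * q1 y + q1 x * q0 y + q2 x * q3 y - q3 x * q2 y)
      (q0 x * q2 y - q1 x * q3 y + q2 x * q0 y + q3 x * q1 y)
      (q0 x * q3 y + q1 x * q2 y - q2 x * q1 y + q3 x * q0 y).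
Definition Hconj (x : H) : H := mkH (q0 x) (- q1 x) (- q2 x) (- q3 x).
Definition H1 : H := mkH 1 0 0 0.
Definition Hi : H := mkH 0 1 0 0.
Definition Hnorm2 (x : H) : R := q0 x ^ 2 + q1 x ^ 2 + q2 x ^ 2 + q3 x ^ 2.

Definition hk (x : H) : H := Hmul (Hmul x Hi) (Hconj x).

(** Convergence of a series of (nonnegative) reals indexed by Z:
    sum_{k>=0} f k + sum_{k>=1} f (-k) converges. *)
Definition Zsummable (f : Z -> R) : Prop :=
  exists l, infinite_sum (fun k => f (Z.of_nat k) + f (Z.opp (Z.of_nat (S k)))) l.

Fixpoint Zpartial_prod (g : Z -> H) (N : nat) : H :=
  match N with
  | O => g 0%Z
  | S N' => Hmul (Hmul (g (Z.opp (Z.of_nat (S N')))) (Zpartial_prod g N'))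
                 (g (Z.of_nat (S N')))
  end.

Definition Zprod_eq_one (g : Z -> H) : Prop :=
  Un_cv (fun N => Hnorm2 (Hsub (Zpartial_prod g N) H1)) 0.

Definition in_S1 (z : H) : Prop := q2 z = 0 /\ q3 z = 0 /\ q0 z ^ 2 + q1 z ^ 2 = 1.

Definition in_M (Lam x : Z -> H) : Prop :=
  Zsummable (fun n => Hnorm2 (Hsub (x n) (Lam n))).

Definition in_G (Lam g : Z -> H) : Prop :=
  (forall n, in_S1 (g n)) /\
  Zsummable (fun n => (1 + Hnorm2 (Lam n)) * Hnorm2 (Hsub H1 (g n))) /\
  Zprod_eq_one g.

Definition in_N (Lam x : Z -> H) : Prop :=
  in_M Lam x /\
  exists c : H, forall n, Hsub (hk (x n)) (hk (Lam n)) = c.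

Definition act (x g : Z -> H) : Z -> H := fun n => Hmul (x n) (g n).

(* Main.v *)
Require Import Defs.
From Stdlib Require Import Reals ZArith Lra Lia Psatz.
Open Scope R_scope.

Lemma sq4 (a b c d : R) : a^2+b^2+c^2+d^2 = 0 -> a=0/\b=0/\c=0/\d=0.
Proof. intros h. repeat split; nra. Qed.

Lemma hk_zero (x : H) : Hnorm2 x = 0 -> hk x = mkH 0 0 0 0.
Proof.
  destruct x as [a b c d]; unfold Hnorm2; simpl; intros h.
  destruct (sq4 _ _ _ _ h) as [-> [-> [-> ->]]].
  unfold hk, Hmul, Hconj, Hi; simpl; f_equal; ring.
Qed.

Lemma Hsub_cancel (a b d : H) : Hsub a b = Hsub a d -> b = d.
Proof.
  destruct a, b, d; unfold Hsub, Hadd, Hopp; simpl; intros h; injection h; intros.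
  f_equal; lra.
Qed.

Lemma Hmul1l y : Hmul H1 y = y.
Proof. destruct y; unfold Hmul, H1; simpl; f_equal; ring. Qed.
Lemma Hmul1r y : Hmul y H1 = y.
Proof. destruct y; unfold Hmul, H1; simpl; f_equal; ring. Qed.

Lemma fix_one (x g : H) : Hnorm2 x <> 0 -> in_S1 g -> Hmul x g = x -> g = H1.
Proof.
  destruct x as [x0 x1 x2 x3], g as [a b c d]; unfold Hnorm2, in_S1; simpl.
  intros hn [hc [hd _]] h; subst c d; unfold Hmul in h; simpl in h.
  injection h; intros e3 e2 e1 e0.
  assert (f0 : x0*a - x1*b - x0 = 0) by (transitivity ((x0 * a - x1 * b - x2 * 0 - x3 * 0) - x0); [ring | rewrite e0; ring]).
  assert (f1 : x0*b + x1*a - x1 = 0) by (transitivity ((x0 * b + x1 * a + x2 * 0 - x3 * 0) - x1); [ring | rewrite e1; ring]).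
  assert (f2 : x2*a + x3*b - x2 = 0) by (transitivity ((x0 * 0 - x1 * 0 + x2 * a + x3 * b) - x2); [ring | rewrite e2; ring]).
  assert (f3 : x3*a - x2*b - x3 = 0) by (transitivity ((x0 * 0 + x1 * 0 - x2 * b + x3 * a) - x3); [ring | rewrite e3; ring]).
  set (u := a - 1).
  assert (hu : u * (x0^2+x1^2+x2^2+x3^2) = 0).
  { replace (u * (x0^2+x1^2+x2^2+x3^2)) with
      (x0*(x0*a - x1*b - x0) + x1*(x0*b + x1*a - x1) + x2*(x2*a+x3*b - x2) + x3*(x3*a - x2*b - x3))
      by (unfold u; ring).
    rewrite f0, f1, f2, f3; ring. }
  assert (hb : b * (x0^2+x1^2+x2^2+x3^2) = 0).
  { replace (b * (x0^2+x1^2+x2^2+x3^2)) with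
      (x0*(x0*b + x1*a - x1) - x1*(x0*a - x1*b - x0) + x3*(x2*a+x3*b - x2) - x2*(x3*a - x2*b - x3))
      by ring.
    rewrite f0, f1, f2, f3; ring. }
  apply Rmult_integral in hu; apply Rmult_integral in hb.
  assert (hn' : x0^2+x1^2+x2^2+x3^2 <> 0) by (intro; apply hn; lra).
  destruct hu as [hu|hu]; [|contradiction]. destruct hb as [hb|hb]; [|contradiction].
  unfold H1; f_equal; unfold u in hu; lra.
Qed.

Lemma prodA (g : Z -> H) (n : Z) (hg : forall m, m <> n -> g m = H1) :
  forall N, (N < Z.abs_nat n)%nat -> Zpartial_prod g N = H1.
Proof.
  induction N; intros hN; [simpl | change (Zpartial_prod g (S N)) with (Hmul (Hmul (g (Z.opp (Z.of_nat (S N)))) (Zpartial_prod g N)) (g (Z.of_nat (S N))))].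
  - apply hg; lia.
  - rewrite IHN by lia. rewrite hg by lia. rewrite hg by lia.
    rewrite !Hmul1l; reflexivity.
Qed.

Lemma prodB (g : Z -> H) (n : Z) (hg : forall m, m <> n -> g m = H1) :
  forall N, (Z.abs_nat n <= N)%nat -> Zpartial_prod g N = g n.
Proof.
  induction N; intros hN; [simpl | change (Zpartial_prod g (S N)) with (Hmul (Hmul (g (Z.opp (Z.of_nat (S N)))) (Zpartial_prod g N)) (g (Z.of_nat (S N))))].
  - f_equal; lia.
  - destruct (Nat.eq_dec (Z.abs_nat n) (S N)) as [e|e].
    + rewrite (prodA g n hg) by lia. rewrite Hmul1r.
      destruct (Z_lt_le_dec n 0).
      * replace (Z.opp (Z.of_nat (S N))) with n by lia.
        rewrite (hg (Z.of_nat (S N))) by lia. apply Hmul1r.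
      * rewrite (hg (Z.opp (Z.of_nat (S N)))) by lia.
        replace (Z.of_nat (S N)) with n by lia. apply Hmul1l.
    + rewrite IHN by lia. rewrite (hg (Z.opp (Z.of_nat (S N)))) by lia.
      rewrite (hg (Z.of_nat (S N))) by lia.
      rewrite Hmul1l, Hmul1r; reflexivity.
Qed.

Lemma norm2_nonneg x : 0 <= Hnorm2 x.
Proof. unfold Hnorm2; nra. Qed.

Theorem proposition2p4 (Lam : Z -> H)
  (Hsum : Zsummable (fun n => / (1 + Hnorm2 (Lam n))))
  (Hgen : forall n m : Z, n <> m -> hk (Lam n) <> hk (Lam m)) :
  forall (x g : Z -> H), in_N Lam x -> in_G Lam g ->
    act x g = x -> forall n, g n = H1.
Proof.
  intros x g [_ [c hc]] [hS1 [_ hprod]] hact.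
  assert (fix1 : forall m, Hnorm2 (x m) <> 0 -> g m = H1).
  { intros m hm. apply (fix_one (x m)); auto.
    change (act x g m = x m). rewrite hact; reflexivity. }
  intros n.
  destruct (Req_dec (Hnorm2 (x n)) 0) as [h0|h0]; [|auto].
  assert (hg : forall m, m <> n -> g m = H1).
  { intros m hmn. apply fix1. intros hm. apply (Hgen m n hmn).
    apply (Hsub_cancel (mkH 0 0 0 0)).
    rewrite <- (hk_zero _ hm). rewrite hc.
    rewrite (hk_zero _ hm), <- (hk_zero _ h0), hc; reflexivity. }
  set (v := Hnorm2 (Hsub (g n) H1)).
  assert (hv : v = 0).
  { destruct (Req_dec v 0) as [|hne]; auto.
    pose proof (norm2_nonneg (Hsub (g n) H1)) as hpos. fold v in hpos.
    destruct (hprod (v/2)) as [N0 hN0]; [lra|].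
    specialize (hN0 (Nat.max N0 (Z.abs_nat n)) ltac:(lia)).
    rewrite (prodB g n hg) in hN0 by lia. fold v in hN0.
    unfold Rdist in hN0. rewrite Rminus_0_r, Rabs_right in hN0 by lra. lra. }
  unfold v, Hnorm2 in hv. destruct (g n) as [a b c' d]; unfold Hsub, Hadd, Hopp, H1 in hv; simpl in hv.
  destruct (sq4 _ _ _ _ hv) as [h1 [h2 [h3 h4]]].
  unfold H1; f_equal; lra.
Qed.
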